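(* Let $k\ge1$ and $0\le r<k$ be integers. Then for every $n\ge1$, $$\sum_{j=0}^n(-1)^j\begin{bmatrix} r+1\\ j\end{bmatrix}_q q^{nkj+\binom{j}{2}-k\binom{j+1}{2}}F^{(k)}_{k(n-j)+r}(x;q)=x^{r+1}F^{(k)}_{kn-1}(x;q),$$ and for every $n\ge1$ and every integer $i$ with $0<i<k+n$, $$\sum_{j=0}^{n-1}(-1)^{n-1-j}\begin{bmatrix} i-k+r\\ n-1-j\end{bmatrix}_q x^k q^{\binom{n-j-1}{2}-k\binom{n-j}{2}+(n-j-1)(kn-i+1)}F^{(k)}_{kj+r}(x;q)=x^{r+i}F^{(k)}_{kn-i}(x;q).$$
   Context: Here $q$ is an indeterminate and all quantities lie in $\mathbb{Q}(q)[x]$. The $q$-binomial coefficient is defined for integers $m$ (possibly negative) and $j$ by $\begin{bmatrix} m\\ j\end{bmatrix}_q=\prod_{t=0}^{j-1}\frac{1-q^{m-t}}{1-q^{t+1}}$ if $j\ge0$ and $0$ if $j<0$. For an integer $k\ge1$, the $q$-Fibonacci polynomials $F^{(k)}_n(x;q)$ ($n\ge0$) are defined by $F^{(k)}_n(x;q)=x^n$ for $0\le n<k$ and $F^{(k)}_{n+k}(x;q)=xF^{(k)}_{n+k-1}(x;q)+q^nF^{(k)}_n(x;q)$ for $n\ge0$. *)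

(* Defs.v *)
From HB Require Import structures.
From mathcomp Require Import all_boot all_order all_algebra.
From mathcomp Require Import fraction.
Set Implicit Arguments. Unset Strict Implicit. Unset Printing Implicit Defensive.
Import Order.TTheory GRing.Theory Num.Theory.
Local Open Scope ring_scope.

Definition Qq : fieldType := {fraction {poly rat}}.
Definition qq : Qq := tofrac ('X : {poly rat}).

(* q-binomial [m choose j]_q for integer m and natural j (the case j < 0,
   where it is 0, never occurs in the statement). *)
Definition qbinom (m : int) (j : nat) : Qq :=
  \prod_(t < j) ((1 - qq ^ (m - t%:Z)) / (1 - qq ^ (t.+1)%:Z)).

Fixpoint qfib_aux (k : nat) (fuel n : nat) : {poly Qq} :=
  match fuel with
  | 0%N => 0
  | fuel'.+1 =>
      if (n < k)%N then 'X^n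
      else 'X * qfib_aux k fuel' n.-1 + (qq ^+ (n - k))%:P * qfib_aux k fuel' (n - k)
  end.

Definition qfib (k n : nat) : {poly Qq} := qfib_aux k n.+1 n.

(* Main.v *)
Require Import Defs.
From HB Require Import structures.
From mathcomp Require Import all_boot all_order all_algebra.
From mathcomp Require Import fraction.
From mathcomp Require Import zify ring lra.
Import Order.TTheory GRing.Theory Num.Theory.
Local Open Scope ring_scope.

Lemma qq_neq0 : qq != 0.
Proof. by rewrite /qq tofrac_eq0 polyX_eq0. Qed.

Lemma qqXn_neq1 n : qq ^ (n.+1)%:Z != 1.
Proof.
rewrite -exprnP /qq -rmorphXn -(rmorph1 (@tofrac _)) tofrac_eq.
by apply/negP => /eqP /(congr1 (fun p : {poly rat} => size p)); rewrite size_polyXn size_poly1.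
Qed.

Lemma qfib_auxE k f g n : (0 < k)%N -> (n < f)%N -> (n < g)%N ->
  qfib_aux k f n = qfib_aux k g n.
Proof.
move=> k0; elim: f g n => [|f IH] [|g] n //= hf hg.
case: ifP => // /negbT hnk.
rewrite (IH g n.-1); [rewrite (IH g (n - k)%N) // | | ]; lia.
Qed.

Lemma qfib_small k n : (n < k)%N -> qfib k n = 'X^n.
Proof. by move=> h; rewrite /qfib /= h. Qed.

Lemma qfib_rec k n : (0 < k)%N -> (k <= n)%N ->
  qfib k n = 'X * qfib k n.-1 + (qq ^+ (n - k))%:P * qfib k (n - k).
Proof.
move=> k0 h; rewrite /qfib /= ltnNge h /=.
rewrite (@qfib_auxE k n n.-1.+1) ?(@qfib_auxE k n (n-k).+1) //; lia.
Qed.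

Lemma qbinom0 m : qbinom m 0 = 1.
Proof. by rewrite /qbinom big_ord0. Qed.

Lemma qbinomS m l : qbinom m l.+1 =
  qbinom m l * ((1 - qq ^ (m - l%:Z)) / (1 - qq ^ (l.+1)%:Z)).
Proof. by rewrite /qbinom big_ord_recr. Qed.

Lemma t1 m l : m + 1 - l.+1%:Z = m - l%:Z.
Proof. rewrite -addn1 PoszD. ring. Qed.
Lemma t2 (a b c d : Qq) : a * (b / c) * d = a * b * d / c.
Proof. ring. Qed.
Lemma qbinom_ratio m l :
  qbinom (m + 1) l * (1 - qq ^ (m + 1 - l%:Z)) = qbinom m l * (1 - qq ^ (m + 1)).
Proof.
elim: l => [|l IH]; first by rewrite !qbinom0 subr0.
rewrite !qbinomS t1.
move: IH; move: (qbinom (m+1) l) (qbinom m l) (qq ^ (m + 1 - l%:Z)) (qq ^ (m - l%:Z))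
  (qq ^ (l.+1)%:Z) (qq ^ (m+1)) => A B C D E G IH.
transitivity ((A * (1 - C)) * ((1 - D) / (1 - E))); first by ring.
rewrite IH; ring.
Qed.

Lemma qbinom_pascal m l :
  qbinom (m + 1) l.+1 = qq ^ (l.+1)%:Z * qbinom m l.+1 + qbinom m l.
Proof.
rewrite qbinomS.
have e : qq ^ (m + 1) = qq ^ (l.+1)%:Z * qq ^ (m - l%:Z).
  by rewrite -expfzDr ?qq_neq0 //; congr (_ ^ _); rewrite -addn1 PoszD; ring.
have D : 1 - qq ^ (l.+1)%:Z != 0 by rewrite subr_eq0 eq_sym qqXn_neq1.
have R := qbinom_ratio m l.
rewrite qbinomS.
move: R D e; move: (qbinom (m+1) l) (qbinom m l) (qq ^ (m + 1 - l%:Z)) (qq ^ (m - l%:Z))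
  (qq ^ (l.+1)%:Z) (qq ^ (m+1)) => A B C D E G R HE e.
transitivity ((A * (1 - C)) / (1 - E)); first by ring.
rewrite R e.
transitivity ((E * (B * (1 - D)) + B * (1 - E)) / (1 - E)).
  by congr (_ / _); ring.
rewrite mulrDl mulfK //; ring.
Qed.

Definition cf_def (k r n i j : nat) : Qq :=
  (-1) ^+ (n - 1 - j) * qbinom (i%:Z - k%:Z + r%:Z) (n - 1 - j)
         * qq ^ (('C(n - j - 1, 2))%:Z - (k * 'C(n - j, 2))%:Z
                 + ((n - j - 1) * (k * n - i + 1))%:Z).

Fact cf_key : unit. Proof. exact: tt. Qed.
Definition cf := locked_with cf_key cf_def.
Lemma cfE k r n i j : cf k r n i j = cf_def k r n i j.
Proof. by rewrite /cf unlock. Qed.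

Lemma cf_last k r n i : cf k r n.+1 i n = 1.
Proof.
rewrite cfE /cf_def.
have -> : (n.+1 - 1 - n = 0)%N by lia.
have -> : (n.+1 - n - 1 = 0)%N by lia.
have -> : (n.+1 - n = 1)%N by lia.
by rewrite expr0 qbinom0 !mul1r !bin_small // muln0 mul0n; apply: expr0z.
Qed.

Lemma cf_rec k r n i j : (0 < k)%N -> (j < n)%N -> (i <= k * n)%N ->
  cf k r n.+1 i j = cf k r n.+1 i.+1 j + qq ^+ (k * n - i) * cf k r n i j.
Proof.
move=> k0 jn ikn; rewrite !cfE /cf_def.
set l := (n - j - 1)%N.
set s := (k * n - i)%N.
have -> : (n.+1 - 1 - j = l.+1)%N by lia.
have -> : (n.+1 - j - 1 = l.+1)%N by lia.
have -> : (n.+1 - j = l.+2)%N by lia.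
have -> : (n - 1 - j = l)%N by lia.
have -> : (n - j = l.+1)%N by lia.
have -> : (k * n.+1 - i + 1 = s + k + 1)%N by lia.
have -> : (k * n.+1 - i.+1 + 1 = s + k)%N by lia.
have -> : (i.+1)%:Z - k%:Z + r%:Z = (i%:Z - k%:Z + r%:Z) + 1.
  by rewrite -addn1 PoszD; ring.
rewrite qbinom_pascal.
have b2 : 'C(l.+2, 2) = ('C(l.+1, 2) + l.+1)%N by rewrite binS bin1.
have b1 : 'C(l.+1, 2) = ('C(l, 2) + l)%N by rewrite binS bin1.
have e1 : qq ^ (('C(l.+1, 2))%:Z - (k * 'C(l.+2, 2))%:Z + (l.+1 * (s + k + 1))%:Z)
  = qq ^ (l.+1)%:Z * qq ^ (('C(l.+1, 2))%:Z - (k * 'C(l.+2, 2))%:Z + (l.+1 * (s + k))%:Z).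
  rewrite -expfzDr ?qq_neq0 //; congr (_ ^ _); lia.
have e2 : qq ^+ s * qq ^ (('C(l, 2))%:Z - (k * 'C(l.+1, 2))%:Z + (l * (s + 1))%:Z)
  = qq ^ (('C(l.+1, 2))%:Z - (k * 'C(l.+2, 2))%:Z + (l.+1 * (s + k))%:Z).
  rewrite exprnP -expfzDr ?qq_neq0 //; congr (_ ^ _); rewrite b2 b1; lia.
rewrite e1 -e2 exprS.
move: (qq ^+ s) (qq ^ (l.+1)%:Z) (qq ^ (('C(l, 2))%:Z - (k * 'C(l.+1, 2))%:Z + (l * (s + 1))%:Z))
  (qbinom (i%:Z - k%:Z + r%:Z) l.+1) (qbinom (i%:Z - k%:Z + r%:Z) l) ((-1 : Qq) ^+ l) => A B C D E F.
ring.
Qed.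


Definition Ssum (k r n i : nat) : {poly Qq} :=
  \sum_(j < n) (cf k r n i j)%:P * 'X^k * qfib k (k * j + r).

Definition Gv (k r n i : nat) : {poly Qq} := 'X^(r + i) * qfib k (k * n - i).

Lemma Ssum_rec k r n i : (0 < k)%N -> (i <= k * n)%N ->
  Ssum k r n.+1 i = Ssum k r n.+1 i.+1 + (qq ^+ (k * n - i))%:P * Ssum k r n i.
Proof.
move=> k0 h.
have -> : forall c : Qq, c%:P * Ssum k r n i =
   \sum_(j < n) c%:P * ((cf k r n i j)%:P * 'X^k * qfib k (k * j + r)).
  by move=> c; rewrite /Ssum; exact: mulr_sumr.
rewrite /Ssum [LHS](big_ord_recr n) [in RHS](big_ord_recr n).
have E1 : cf k r n.+1 i (@ord_max n) = 1 := cf_last k r n i.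
have E2 : cf k r n.+1 i.+1 (@ord_max n) = 1 := cf_last k r n i.+1.
rewrite E1 E2.
rewrite -addrA [X in _ = _ + X]addrC addrA.
congr (_ + _).
rewrite -big_split.
apply: eq_bigr => j _.
rewrite (@cf_rec k r n i j) // polyCD polyCM.
move: (cf k r n.+1 i.+1 j)%:P (qq ^+ (k * n - i))%:P (cf k r n i j)%:P ('X^k : {poly Qq}) (qfib k (k * j + r)) => A B C D E.
by rewrite !mulrDl -!mulrA.
Qed.

Lemma Gv_rec k r n i : (0 < k)%N -> (i <= k * n)%N ->
  Gv k r n.+1 i = Gv k r n.+1 i.+1 + (qq ^+ (k * n - i))%:P * Gv k r n i.
Proof.
move=> k0 h; rewrite /Gv (@qfib_rec k (k * n.+1 - i)) //; last by lia.
have -> : ((k * n.+1 - i).-1 = k * n.+1 - i.+1)%N by lia.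
have -> : (k * n.+1 - i - k = k * n - i)%N by lia.
rewrite addnS exprS.
move: ('X : {poly Qq}) ('X^(r+i) : {poly Qq}) (qfib _ _) (qfib _ _) (qq ^+ _)%:P => A B C D E.
by rewrite mulrDr !mulrA (mulrC A) (mulrC E).
Qed.

Lemma qbinom0S l : qbinom 0 l.+1 = 0.
Proof. by rewrite /qbinom big_ord_recl /= [X in 1 - qq ^ X](_ : _ = 0) // expr0z subrr !mul0r. Qed.

Lemma cf_zero k r n j : (r < k)%N -> (j < n)%N -> cf k r n.+1 (k - r)%N j = 0.
Proof.
move=> rk jn; rewrite cfE /cf_def.
have -> : ((k - r)%N%:Z - k%:Z + r%:Z) = 0 by lia.
have -> : (n.+1 - 1 - j = (n - 1 - j).+1)%N by lia.
by rewrite qbinom0S mulr0 mul0r.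
Qed.

Lemma main k r : (0 < k)%N -> (r < k)%N -> forall n i, (0 < i)%N -> (i < k + n.+1)%N ->
  Ssum k r n.+1 i = Gv k r n.+1 i.
Proof.
move=> k0 rk; elim=> [|n IH] i i0 ik.
  rewrite /Ssum /Gv big_ord1.
  have -> : cf k r 1 i (@ord0 0) = 1 := cf_last k r 0 i.
  have -> : (k * (@ord0 0) + r = r)%N by rewrite /= muln0.
  rewrite qfib_small // qfib_small; last by lia.
  rewrite rmorph1 mul1r -!exprD; congr (_ ^+ _); lia.
set N := n.+1.
have base : Ssum k r N.+1 (k - r)%N = Gv k r N.+1 (k - r)%N.
  rewrite /Ssum /Gv big_ord_recr big1; last first.
    move=> j _; rewrite cf_zero; [|done|exact: ltn_ord j].
    have P0 : (0 : Qq)%:P = 0 := polyC0 _.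
    by rewrite P0 !mul0r.
  have -> : cf k r N.+1 (k - r)%N (@ord_max N) = 1 := cf_last k r N (k - r)%N.
  apply: etrans (add0r _) _.
  have P1 : (1 : Qq)%:P = 1 := polyC1 _.
  rewrite P1 mul1r.
  have -> : (r + (k - r) = k)%N by lia.
  have -> : (k * N.+1 - (k - r) = k * (@ord_max N) + r)%N by rewrite /=; lia.
  by [].
have up : forall d, (k - r + d < k + N.+1)%N -> Ssum k r N.+1 (k - r + d)%N = Gv k r N.+1 (k - r + d)%N.
  elim=> [|d IHd] h; first by rewrite addn0.
  have h1 : (k - r + d <= k * N)%N by rewrite /N; nia.
  have R1 := @Ssum_rec k r N (k - r + d)%N k0 h1.
  have R2 := @Gv_rec k r N (k - r + d)%N k0 h1.
  have e := IH (k - r + d)%N ltac:(lia) ltac:(lia).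
  rewrite addnS.
  have := IHd ltac:(lia).
  rewrite R1 R2 e => /addIr //.
have down : forall d, (d < k - r)%N -> Ssum k r N.+1 (k - r - d)%N = Gv k r N.+1 (k - r - d)%N.
  elim=> [|d IHd] h; first by rewrite subn0.
  have h1 : (k - r - d.+1 <= k * N)%N by rewrite /N; nia.
  have R1 := @Ssum_rec k r N (k - r - d.+1)%N k0 h1.
  have R2 := @Gv_rec k r N (k - r - d.+1)%N k0 h1.
  have e := IH (k - r - d.+1)%N ltac:(lia) ltac:(lia).
  have E : (k - r - d.+1)%N.+1 = (k - r - d)%N%N by lia.
  rewrite R1 R2 e E IHd //; lia.
case: (leqP (k - r) i) => hi.
  have -> : i = (k - r + (i - (k - r)))%N by lia.
  apply: up; lia.
have -> : i = (k - r - (k - r - i))%N by lia.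
apply: down; lia.
Qed.

Lemma cf_part1 k r n j : (0 < k)%N -> (j <= n)%N ->
  cf k r n.+1 k.+1 (n - j) = (-1) ^+ j * qbinom (r.+1)%:Z j
         * qq ^ ((n * k * j)%:Z + ('C(j, 2))%:Z - (k * 'C(j.+1, 2))%:Z).
Proof.
move=> k0 jn; rewrite cfE /cf_def.
have -> : (n.+1 - 1 - (n - j) = j)%N by lia.
have -> : (n.+1 - (n - j) - 1 = j)%N by lia.
have -> : (n.+1 - (n - j) = j.+1)%N by lia.
have -> : (k.+1)%:Z - k%:Z + r%:Z = (r.+1)%:Z by rewrite -[k.+1]addn1 -[r.+1]addn1 !PoszD; ring.
have -> : (j * (k * n.+1 - k.+1 + 1) = n * k * j)%N.
  case: n jn => [|m] jn; first by rewrite (_ : j = 0%N) ?mul0n ?muln0 //; lia.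
  have -> : (k * m.+2 - k.+1 + 1 = k * m.+1)%N by nia.
  nia.
congr (_ * _ ^ _); lia.
Qed.

Lemma Xk_neq0 k : ('X^k : {poly Qq}) != 0.
Proof. by rewrite expf_neq0 // polyX_eq0. Qed.

Theorem lemma11 (k r : nat) (hk : (1 <= k)%N) (hr : (r < k)%N) :
  (forall n : nat, (1 <= n)%N ->
     \sum_(j < n.+1)
        ((-1) ^+ j * qbinom (r.+1)%:Z j
         * qq ^ ((n * k * j)%:Z + ('C(j, 2))%:Z - (k * 'C(j.+1, 2))%:Z))%:P
        * qfib k (k * (n - j) + r)
     = 'X^(r.+1) * qfib k (k * n - 1))
  /\
  (forall n i : nat, (1 <= n)%N -> (0 < i)%N -> (i < k + n)%N ->
     \sum_(j < n)
        ((-1) ^+ (n - 1 - j) * qbinom (i%:Z - k%:Z + r%:Z) (n - 1 - j)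
         * qq ^ (('C(n - j - 1, 2))%:Z - (k * 'C(n - j, 2))%:Z
                 + ((n - j - 1) * (k * n - i + 1))%:Z))%:P
        * 'X^k * qfib k (k * j + r)
     = 'X^(r + i) * qfib k (k * n - i)).
Proof.
Proof.
split.
- move=> n n1.
  have M := @main k r hk hr n k.+1 ltac:(lia) ltac:(lia).
  apply: (mulfI (Xk_neq0 k)).
  transitivity (Ssum k r n.+1 k.+1); last first.
    rewrite M /Gv.
    have -> : (k * n.+1 - k.+1 = k * n - 1)%N by nia.
    by rewrite mulrA -exprD; congr (_ ^+ _ * _); lia.
  rewrite /Ssum.
  transitivity (\sum_(j < n.+1) 'X^k * (((-1) ^+ j * qbinom (r.+1)%:Z j
         * qq ^ ((n * k * j)%:Z + ('C(j, 2))%:Z - (k * 'C(j.+1, 2))%:Z))%:P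
        * qfib k (k * (n - j) + r))).
    exact: mulr_sumr.
  rewrite [RHS](reindex_inj rev_ord_inj).
  apply: eq_bigr => j _.
  have jn : (j <= n)%N by have := ltn_ord j; lia.
  have -> : cf k r n.+1 k.+1 (rev_ord j) = (-1) ^+ j * qbinom (r.+1)%:Z j
         * qq ^ ((n * k * j)%:Z + ('C(j, 2))%:Z - (k * 'C(j.+1, 2))%:Z) := @cf_part1 k r n j hk jn.
  have -> : (k * rev_ord j + r = k * (n - j) + r)%N by rewrite /=; lia.
  rewrite mulrA; congr (_ * _); exact: mulrC.
- move=> n i n1 i0 ik.
  case: n n1 ik => [|n] // _ ik.
  have M := @main k r hk hr n i i0 ik.
  rewrite /Ssum /Gv in M; rewrite -M.
  apply: eq_bigr => j _.
  by rewrite cfE.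
Qed.
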